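(* Let $n\ge1$ and let $M=M(h)$ be an $n\times n$ complex matrix of the form $M=D(I_n+E(h))D$, where $D(h)=\operatorname{diag}(\nu_j(h))$ is diagonal with $\nu_j(h)\in\mathbb C$ and $E(h)=\mathcal O(h^\infty)$ as $h\to0$. Then the eigenvalues of $M$ are of the form $\nu_j^2(h)(1+\mathcal O(h^\infty))$.
   Context: $E(h)=\mathcal O(h^\infty)$ means that for every $N$ there is $C_N$ with $\|E(h)\|\le C_Nh^N$ for $h$ small enough. *)

(* Defs.v *)
From HB Require Import structures.
From mathcomp Require Import all_boot all_order all_algebra.
From mathcomp Require Import complex.
From mathcomp Require Import reals.
Set Implicit Arguments. Unset Strict Implicit. Unset Printing Implicit Defensive.
Import Order.TTheory GRing.Theory Num.Theory.
Local Open Scope ring_scope.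
Local Open Scope complex_scope.

Definition Oinf (R : realType) (f : R -> R[i]) : Prop :=
  forall N : nat, exists C : R, exists h0 : R, 0 < h0 /\
    forall h : R, 0 < h < h0 -> `|f h| <= ((C * h ^+ N)%:C)%C.

(* matrix-valued O(h^oo): every entry is O(h^oo) (equivalent to any matrix norm) *)
Definition MOinf (R : realType) (n : nat) (E : R -> 'M[R[i]]_n) : Prop :=
  forall i j : 'I_n, Oinf (fun h => E h i j).

Definition Mmat (R : realType) (n : nat) (nu : 'I_n -> R -> R[i])
  (E : R -> 'M[R[i]]_n) (h : R) : 'M[R[i]]_n :=
  let D := diag_mx (\row_j nu j h) in D *m (1%:M + E h) *m D.

(* Main.v *)
Require Import Defs.
From HB Require Import structures.
From mathcomp Require Import all_boot all_order all_algebra.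
From mathcomp Require Import complex.
From mathcomp Require Import reals.
Import Order.TTheory GRing.Theory Num.Theory.
Local Open Scope ring_scope.
From mathcomp Require Import lra ring zify.
From Stdlib Require Import ClassicalEpsilon.

Section All.
Local Set Implicit Arguments.
Local Unset Strict Implicit.
Local Unset Printing Implicit Defensive.
Local Open Scope complex_scope.

Section NM.
Variable R : realType.
Local Notation C := R[i].

Definition nm (z : C) : R := complex.Re `|z|.

Lemma nmE z : `|z| = (nm z)%:C.
Proof. by rewrite /nm RRe_real // normr_real. Qed.

Lemma nm_ge0 z : 0 <= nm z.
Proof. by rewrite -ler0c -nmE. Qed.

Lemma nmD x y : nm (x + y) <= nm x + nm y.
Proof. by rewrite -lecR rmorphD /= -!nmE ler_normD. Qed.

Lemma nmM x y : nm (x * y) = nm x * nm y.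
Proof. by apply: complexI; rewrite rmorphM /= -!nmE normrM. Qed.

Lemma nmN x : nm (- x) = nm x.
Proof. by rewrite /nm normrN. Qed.

Lemma nmC x y : nm (x - y) = nm (y - x).
Proof. by rewrite /nm distrC. Qed.

Lemma nm0 : nm 0 = 0.
Proof. by rewrite /nm normr0. Qed.

Lemma nm1 : nm 1 = 1.
Proof. by rewrite /nm normr1. Qed.

Lemma nm_eq0 z : (nm z == 0) = (z == 0).
Proof. by rewrite -[RHS]normr_eq0 nmE -(inj_eq (@complexI R)). Qed.

Lemma nmR (r : R) : nm (r%:C) = `|r|.
Proof.
apply: complexI; rewrite /nm RRe_real ?normr_real // normc_def /=.
by rewrite expr0n /= addr0 sqrtr_sqr.
Qed.

Lemma nmB x y : nm x - nm y <= nm (x - y).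
Proof.
have := nmD (x - y) y; rewrite subrK; lra.
Qed.

Lemma nm_sum (I : Type) (s : seq I) (F : I -> C) :
  nm (\sum_(i <- s) F i) <= \sum_(i <- s) nm (F i).
Proof.
elim: s => [|a s IH]; first by rewrite !big_nil nm0.
rewrite !big_cons; apply: le_trans (nmD _ _) _; lra.
Qed.

Lemma nm_prod (I : Type) (s : seq I) (F : I -> C) :
  nm (\prod_(i <- s) F i) = \prod_(i <- s) nm (F i).
Proof.
elim: s => [|a s IH]; first by rewrite !big_nil nm1.
by rewrite !big_cons nmM IH.
Qed.

Lemma nmX x k : nm (x ^+ k) = nm x ^+ k.
Proof.
elim: k => [|k IH]; first by rewrite !expr0 nm1.
by rewrite !exprS nmM IH.
Qed.

Lemma nm_nat k : nm (k%:R) = k%:R.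
Proof. by rewrite -(rmorph_nat (real_complex R)) nmR ger0_norm. Qed.


Definition Pr (s : seq C) : {poly C} := \prod_(x <- s) ('X - x%:P).

Lemma size_Pr s : size (Pr s) = (size s).+1.
Proof. exact: size_prod_XsubC. Qed.

Lemma coef_XsubCM (x : C) (p : {poly C}) k :
  (('X - x%:P) * p)`_k = (if k is k'.+1 then p`_k' else 0) - x * p`_k.
Proof. by rewrite mulrBl coefB coefXM coefCM; case: k. Qed.

Lemma Pr_coef_bound (B : R) (s : seq C) : 0 <= B ->
  (forall x, x \in s -> nm x <= B) ->
  forall k, nm (Pr s)`_k <= (1 + B) ^+ size s.
Proof.
move=> B0; elim: s => [|x s IH] Hs k.
  rewrite /Pr big_nil coefC expr0; case: eqP => _; rewrite ?nm1 ?nm0 //.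
have IH' := IH (fun y ys => Hs y (@mem_behead _ (x :: s) _ ys)).
have Hx := Hs x (mem_head _ _).
rewrite /Pr big_cons -/(Pr s) coef_XsubCM /= exprS.
apply: le_trans (nmD _ _) _; rewrite nmN nmM.
have h1 : nm (if k is k'.+1 then (Pr s)`_k' else 0) <= (1 + B) ^+ size s.
  case: k => [|k]; last exact: IH'.
  by rewrite nm0 exprn_ge0 // addr_ge0.
have h2 := IH' k.
have h3 := nm_ge0 x.
have h4 := nm_ge0 (Pr s)`_k.
set P := (1 + B) ^+ size s in h1 h2 *.
nra.
Qed.

Lemma eval_bound (B eta : R) (f : {poly C}) (m : nat) (z : C) :
  1 <= B -> (size f <= m)%N -> (forall k, nm f`_k <= eta) -> nm z <= B ->
  nm f.[z] <= eta * m%:R * B ^+ m.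
Proof.
move=> B1 Hs Hc Hz.
have eta0 : 0 <= eta by apply: le_trans (Hc 0%N); apply: nm_ge0.
rewrite horner_coef; apply: le_trans (nm_sum _ _) _.
apply: (@le_trans _ _ (\sum_(i < size f) (eta * B ^+ m))).
  apply: ler_sum => i _; rewrite nmM nmX.
  apply: ler_pM => //; first exact: nm_ge0.
    by rewrite exprn_ge0 // nm_ge0.
  apply: (@le_trans _ _ (B ^+ i)).
    by apply: lerXn2r => //; rewrite ?nnegrE ?nm_ge0 //; lra.
  by apply: ler_weXn2l => //; apply: leq_trans Hs; apply: ltnW.
rewrite sumr_const card_ord -mulr_natr.
have hs : (size f)%:R <= m%:R :> R by rewrite ler_nat.
have hP : 0 <= B ^+ m by rewrite exprn_ge0 //; lra.
have hs0 : 0 <= (size f)%:R :> R by rewrite ler0n.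
have hEP := mulr_ge0 eta0 hP.
set P := B ^+ m in hP hEP *; nra.
Qed.

Lemma deflate_bound (B eta : R) (x : C) (f g : {poly C}) (m : nat) :
  1 <= B -> nm x <= B -> (size f <= m)%N -> ('X - x%:P) * f = g ->
  (forall k, nm g`_k <= eta) -> 0 <= eta ->
  forall k, nm f`_k <= eta * m%:R * B ^+ m.
Proof.
move=> B1 Hx Hs Hfg Hg eta0.
have key : forall j, (j <= m)%N -> nm f`_(m - j) <= eta * j%:R * B ^+ j.
  elim=> [|j IH] Hj.
    by rewrite subn0 nth_default // nm0 mulr0 mul0r.
  have Hj' : (j <= m)%N by apply: ltnW.
  have IHj := IH Hj'.
  have Hge : f`_(m - j.+1) = g`_(m - j) + x * f`_(m - j).
    rewrite -Hfg coef_XsubCM.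
    have -> : (m - j = (m - j.+1).+1)%N by rewrite subnS prednK // subn_gt0.
    by rewrite subrK.
  rewrite Hge; apply: le_trans (nmD _ _) _; rewrite nmM.
  have h1 := Hg (m - j)%N.
  have h2 := nm_ge0 x.
  have h3 := nm_ge0 f`_(m - j).
  have h4 : 1 <= B ^+ j by apply: exprn_ege1.
  rewrite exprS -natr1.
  set P := B ^+ j in h4 IHj *; set J := j%:R in IHj *.
  have J0 : 0 <= J by rewrite /J ler0n.
  have ha : nm x * nm f`_(m - j) <= B * (eta * J * P).
    by apply: ler_pM.
  have hBP : 1 <= B * P by rewrite -[1]mulr1; apply: ler_pM.
  have hb : eta <= eta * (B * P).
    by rewrite -{1}[eta]mulr1; apply: ler_wpM2l.
  have -> : eta * (J + 1) * (B * P) = B * (eta * J * P) + eta * (B * P) by ring.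
  lra.
move=> k; case: (leqP k m) => Hkm.
  have := key (m - k)%N (leq_subr _ _); rewrite subKn //.
  move=> H; apply: le_trans H _.
  apply: ler_pM; first by apply: mulr_ge0 => //; rewrite ler0n.
    by rewrite exprn_ge0 //; lra.
    by apply: ler_wpM2l => //; rewrite ler_nat leq_subr.
  by apply: ler_weXn2l => //; apply: leq_subr.
rewrite nth_default ?nm0; last by apply: leq_trans Hs (ltnW Hkm).
by apply: mulr_ge0; [apply: mulr_ge0 => //; rewrite ler0n | rewrite exprn_ge0 //; lra].
Qed.


Lemma prod_ge_const (s : seq C) (c : R) (F : C -> R) : 0 <= c ->
  (forall y, y \in s -> c <= F y) -> c ^+ size s <= \prod_(y <- s) F y.
Proof.
move=> c0; elim: s => [|y s IH] H; first by rewrite big_nil expr0.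
rewrite big_cons /= exprS; apply: ler_pM => //.
- by rewrite exprn_ge0.
- exact: H (mem_head _ _).
- exact: IH (fun z zs => H z (@mem_behead _ (y :: s) _ zs)).
Qed.

Lemma Pr_eval s z : (Pr s).[z] = \prod_(y <- s) (z - y).
Proof. by rewrite /Pr horner_prod; apply: eq_bigr => y _; rewrite hornerXsubC. Qed.

Definition Kc (n : nat) (B : R) := (n.+2)%:R * (1 + B) ^+ (2 * n + 2).

Lemma Kc_gt0 n B : 1 <= B -> 0 < Kc n B.
Proof. by move=> B1; rewrite /Kc mulr_gt0 ?ltr0n // exprn_gt0 //; lra. Qed.

Lemma KcA n B : 1 <= B -> (n.+2)%:R * B ^+ n.+2 <= Kc n B.
Proof.
move=> B1; rewrite /Kc; apply: ler_wpM2l; first by rewrite ler0n.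
apply: (@le_trans _ _ ((1 + B) ^+ n.+2)).
  by apply: lerXn2r; rewrite ?nnegrE //; lra.
by apply: ler_weXn2l; [lra | lia].
Qed.

Lemma KcB n B : 1 <= B -> (1 + B) ^+ n * ((n.+1)%:R * B ^+ n.+1) <= Kc n B.
Proof.
move=> B1; rewrite /Kc mulrCA; apply: ler_pM.
- by rewrite ler0n.
- by apply: mulr_ge0; rewrite exprn_ge0 //; lra.
- by rewrite ler_nat.
apply: (@le_trans _ _ ((1 + B) ^+ n * (1 + B) ^+ n.+1)).
  apply: ler_wpM2l; first by rewrite exprn_ge0 //; lra.
  by apply: lerXn2r; rewrite ?nnegrE //; lra.
rewrite -exprD; apply: ler_weXn2l; [lra | lia].
Qed.

Lemma matching (B : R) : 1 <= B -> forall (n : nat) (d : R), 0 < d ->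
  exists2 del : R, 0 < del & forall a b : seq C, size a = n -> size b = n ->
   (forall x, x \in a -> nm x <= B) -> (forall x, x \in b -> nm x <= B) ->
   (forall k, nm ((Pr a)`_k - (Pr b)`_k) <= del) ->
   exists2 b' : seq C, perm_eq b b' &
     forall i, (i < n)%N -> nm (nth 0 a i - nth 0 b' i) < d.
Proof.
move=> B1; elim=> [|n IH] d d0.
  exists 1 => // a b _ _ _ _ _; exists b => //; exact: perm_refl.
have [d1 d10 H1] := IH d d0.
have K0 := Kc_gt0 n B1.
have KA := KcA n B1.
have KB := KcB n B1.
set K := Kc n B in K0 KA KB.
have [eta [eta0 etad etad1]] : exists eta, [/\ 0 < eta, eta <= d & eta <= d1 / (2 * K)].
  exists (Order.min d (d1 / (2 * K))); rewrite lt_min !ge_min !lexx /= !orbT.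
  by rewrite d0 /= divr_gt0 // mulr_gt0.
have [del [del0 deld1 deleta]] : exists del,
    [/\ 0 < del, del <= d1 / (2 * K) & del <= eta ^+ n.+1 / (2 * K)].
  exists (Order.min (d1 / (2 * K)) (eta ^+ n.+1 / (2 * K))).
  rewrite lt_min !ge_min !lexx /= !orbT.
  have h2K : 0 < 2 * K by apply: mulr_gt0.
  split => //; apply/andP; split; apply: divr_gt0 => //; exact: exprn_gt0.
exists del => // a b sa sb Ha Hb Hab.
case: a sa Ha Hab => [//|x a1] [sa1] Ha Hab.
have Hx : nm x <= B by apply: Ha; exact: mem_head.
have qx : nm (Pr b).[x] <= del * K.
  have -> : (Pr b).[x] = ((Pr b) - (Pr (x :: a1))).[x].
    by rewrite hornerD hornerN [(Pr (x :: a1)).[x]]Pr_eval big_cons subrr mul0r subr0.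
  apply: le_trans (eval_bound (m := n.+2) B1 _ _ Hx) _.
  - apply: leq_trans (size_polyD _ _) _.
    by rewrite size_polyN !size_Pr sb /= sa1 maxnn.
  - by move=> k; rewrite coefB nmC; apply: Hab.
  rewrite -mulrA; apply: ler_wpM2l; [lra | exact: KA].
have [y yb xy] : exists2 y, y \in b & nm (x - y) < eta.
  case: (boolP (has (fun y => nm (x - y) < eta) b)) => [/hasP [y yb xy]|hn].
    by exists y.
  have : eta ^+ n.+1 <= nm (Pr b).[x].
    rewrite Pr_eval nm_prod -sb; apply: prod_ge_const; first lra.
    move=> y yb; rewrite leNgt; apply/negP => xy.
    by move/hasP: hn; apply; exists y.
  have : 0 < eta ^+ n.+1 by rewrite exprn_gt0.
  have : del * K <= eta ^+ n.+1 / 2.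
    have := ler_wpM2r (ltW K0) deleta.
    have KE : eta ^+ n.+1 / (2 * K) * K = eta ^+ n.+1 / 2.
      by field; rewrite gt_eqF.
    by rewrite KE.
  lra.
set b1 := rem y b.
have pb : perm_eq b (y :: b1) by apply: perm_to_rem.
have sb1 : size b1 = n by rewrite /b1 size_rem // sb.
have Hb1 : forall z, z \in b1 -> nm z <= B by move=> z zb; apply: Hb; apply: mem_rem zb.
have Hy : nm y <= B by apply: Hb.
have Pb : Pr b = ('X - y%:P) * Pr b1 by rewrite /Pr (perm_big _ pb) big_cons.
have Pa : Pr (x :: a1) = ('X - x%:P) * Pr a1 by rewrite /Pr big_cons.
set g := ('X - x%:P) * (Pr a1 - Pr b1).
have gE : g = (Pr (x :: a1) - Pr b) - (y - x)%:P * Pr b1.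
  by rewrite /g Pa Pb rmorphB /=; ring.
have gb : forall k, nm g`_k <= del + eta * (1 + B) ^+ n.
  move=> k; rewrite gE !coefB coefCM; apply: le_trans (nmD _ _) _.
  rewrite nmN nmM; apply: lerD; first exact: Hab.
  apply: ler_pM; rewrite ?nm_ge0 //; first by rewrite nmC ltW.
  by rewrite -sb1; apply: Pr_coef_bound => //; lra.
have fb := deflate_bound (m := n.+1) B1 Hx _ (erefl g) gb.
have : forall k, nm ((Pr a1)`_k - (Pr b1)`_k) <= d1.
  move=> k; rewrite -coefB.
  apply: le_trans (fb _ _ k) _.
  - apply: leq_trans (size_polyD _ _) _.
    by rewrite size_polyN !size_Pr sb1 sa1 maxnn.
  - by apply: addr_ge0; [lra | apply: mulr_ge0; [lra | rewrite exprn_ge0 //; lra]].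
  set X := (n.+1)%:R * B ^+ n.+1 in KB *.
  have X0 : 0 <= X by rewrite mulr_ge0 ?ler0n // exprn_ge0 //; lra.
  have P1 : 1 <= (1 + B) ^+ n by apply: exprn_ege1; lra.
  have hX : X <= K by apply: le_trans KB; rewrite -{1}[X]mul1r; apply: ler_wpM2r.
  set P := (1 + B) ^+ n in P1 KB *.
  have e1 : del * X <= d1 / 2.
    apply: (@le_trans _ _ (d1 / (2 * K) * K)).
      by apply: ler_pM => //; lra.
    by rewrite le_eqVlt; apply/orP; left; apply/eqP; field; rewrite gt_eqF.
  have e2 : eta * (P * X) <= d1 / 2.
    apply: (@le_trans _ _ (d1 / (2 * K) * K)).
      by apply: ler_pM => //; [lra | apply: mulr_ge0 => //; lra].
    by rewrite le_eqVlt; apply/orP; left; apply/eqP; field; rewrite gt_eqF.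
  have -> : (del + eta * P) * (n.+1)%:R * B ^+ n.+1 = del * X + eta * (P * X)
    by rewrite /X; ring.
  lra.
move=> Hc.
have Ha1 : forall z, z \in a1 -> nm z <= B.
  by move=> z za; apply: Ha; rewrite inE za orbT.
have [b1' pb1 Hm] := H1 a1 b1 sa1 sb1 Ha1 Hb1 Hc.
exists (y :: b1').
  by apply: perm_trans pb _; rewrite perm_cons.
case=> [|i] Hi /=; first by apply: lt_le_trans xy etad.
exact: Hm.
Qed.


End NM.

Section NM.
Variable R : realType.
Local Notation C := R[i].

Lemma le_sum_term (I : finType) (F : I -> R) j :
  (forall i, 0 <= F i) -> F j <= \sum_i F i.
Proof.
move=> F0; rewrite (bigD1 j) //= lerDl; apply: sumr_ge0 => i _; exact: F0.
Qed.

Lemma poly_lip (c : {poly C}) (t s : C) : nm t <= 1 -> nm s <= 1 ->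
  nm (c.[t] - c.[s]) <= (\sum_(i < size c) nm c`_i * i%:R) * nm (t - s).
Proof.
move=> ht hs; rewrite !horner_coef -sumrB mulr_suml.
apply: le_trans (nm_sum _ _) _; apply: ler_sum => i _.
rewrite -mulrBr subrXX nmM nmM -mulrA; apply: ler_wpM2l; first exact: nm_ge0.
rewrite mulrC; apply: ler_wpM2r; first exact: nm_ge0.
apply: le_trans (nm_sum _ _) _.
apply: (@le_trans _ _ (\sum_(j < i) (1 : R))); last by rewrite sumr_const card_ord.
apply: ler_sum => j _; rewrite nmM !nmX.
rewrite -[1]mulr1; apply: ler_pM; rewrite ?exprn_ge0 ?nm_ge0 //;
  apply: exprn_ile1; rewrite ?nm_ge0 //.
Qed.

Section Mat.
Variable n : nat.
Variable nu : 'I_n -> C.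
Variable E : 'M[C]_n.

Definition lam j := nu j ^+ 2.
Definition Dm : 'M[C]_n := diag_mx (\row_j nu j).
Definition Mt (t : C) : 'M[C]_n := Dm *m (1%:M + t *: E) *m Dm.
Definition esum : R := \sum_i \sum_j nm (E i j).

Lemma esum_ge0 : 0 <= esum.
Proof. by apply: sumr_ge0 => i _; apply: sumr_ge0 => j _; apply: nm_ge0. Qed.

Lemma inclusion (t mu : C) : nm t <= 1 -> root (char_poly (Mt t)) mu ->
  exists j, nm (mu - lam j) <= esum * nm (lam j).
Proof.
move=> ht; rewrite -eigenvalue_root_char => /eigenvalueP [v Hv vn0].
set y := v *m Dm.
have Hent : forall i, ((y *m (1%:M + t *: E)) 0 i) * lam i = mu * y 0 i.
  move=> i.
  have := congr1 (fun M : 'rV_n => M 0 i * nu i) Hv.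
  have DmE : forall A : 'M[C]_(1, n), (A *m Dm) 0 i = A 0 i * nu i.
    by move=> A; rewrite /Dm mul_mx_diag !mxE.
  have yE : y 0 i = v 0 i * nu i by rewrite /y DmE.
  rewrite /Mt !mulmxA -/y /= DmE [(mu *: v) 0 i]mxE yE /lam.
  by move=> H; rewrite expr2 mulrA H mulrA.
have Hent2 : forall i, (y 0 i + t * \sum_k y 0 k * E k i) * lam i = mu * y 0 i.
  move=> i; rewrite -Hent mulmxDr mulmx1 -scalemxAr !mxE.
  by [].
case: (pickP (fun i => y 0 i != 0)) => [i0 Hi0|Hy0]; last first.
  case: (pickP (fun i => v 0 i != 0)) => [i1 Hi1|Hv0]; last first.
    by case/eqP: vn0; apply/rowP => i; rewrite mxE; move: (Hv0 i) => /negbFE/eqP.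
  have yi1 : y 0 i1 = 0 by move: (Hy0 i1) => /negbFE/eqP.
  have nui1 : nu i1 = 0.
    by move: yi1; rewrite /y mul_mx_diag !mxE => /eqP; rewrite mulf_eq0 (negbTE Hi1) /= => /eqP.
  have mu0 : mu = 0.
    have := congr1 (fun M : 'rV_n => M 0 i1) Hv.
    rewrite /Mt !mulmxA -/y mul_mx_diag !mxE nui1 mulr0 => /eqP.
    by rewrite eq_sym mulf_eq0 (negbTE Hi1) orbF => /eqP.
  exists i1; rewrite mu0 /lam nui1 expr0n /= subrr nm0.
  by rewrite mulr0.
pose i := [arg max_(i > i0) nm (y 0 i)]%O.
have imax : forall k, nm (y 0 k) <= nm (y 0 i).
  by rewrite /i; case: arg_maxP => // j _ Hj k; apply: Hj.
have yi0 : 0 < nm (y 0 i).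
  apply: lt_le_trans (imax i0); rewrite lt_def nm_eq0 Hi0 nm_ge0 //.
exists i.
have Heq : (mu - lam i) * y 0 i = lam i * (t * \sum_k y 0 k * E k i).
  by rewrite mulrBl -Hent2; ring.
have Hb : nm (\sum_k y 0 k * E k i) <= nm (y 0 i) * esum.
  apply: le_trans (nm_sum _ _) _.
  apply: (@le_trans _ _ (\sum_k nm (y 0 i) * nm (E k i))).
    by apply: ler_sum => k _; rewrite nmM; apply: ler_wpM2r; [exact: nm_ge0 | exact: imax].
  rewrite -mulr_sumr; apply: ler_wpM2l; first exact: nm_ge0.
  by apply: ler_sum => k _; apply: le_sum_term => j; apply: nm_ge0.
have H : nm (mu - lam i) * nm (y 0 i) = nm (lam i) * (nm t * nm (\sum_k y 0 k * E k i)).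
  by rewrite -!nmM Heq.
have hl := nm_ge0 (lam i).
have hs := nm_ge0 (\sum_k y 0 k * E k i).
have hts : nm t * nm (\sum_k y 0 k * E k i) <= nm (y 0 i) * esum.
  apply: le_trans Hb; rewrite -{2}[nm (\sum_k _)]mul1r; apply: ler_wpM2r => //.
have H2 : nm (mu - lam i) * nm (y 0 i) <= esum * nm (lam i) * nm (y 0 i).
  rewrite H; have := ler_wpM2l hl hts.
  set T := nm t * _; set Y := nm (y 0 i); set l := nm (lam i).
  move=> h; apply: le_trans h _; rewrite le_eqVlt; apply/orP; left; apply/eqP; ring.
by rewrite ler_pM2r in H2.
Qed.


Lemma Mt0 : Mt 0 = diag_mx (\row_j lam j).
Proof.
rewrite /Mt scale0r addr0 mulmx1; apply/matrixP => i j.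
rewrite /Dm mul_mx_diag !mxE /lam; case: (eqVneq i j) => [->|_] /=.
  by rewrite !mulr1n expr2.
by rewrite !mulr0n mul0r.
Qed.

Definition lams : seq C := map lam (enum 'I_n).

Lemma char0 : char_poly (Mt 0) = Pr lams.
Proof.
rewrite Mt0 char_poly_trig ?diag_mx_is_trig // /Pr /lams big_map big_enum /=.
by apply: eq_bigr => i _; rewrite !mxE eqxx mulr1n.
Qed.

Lemma nth_lams (j : 'I_n) : nth 0 lams j = lam j.
Proof. by rewrite /lams (nth_map j) ?size_enum_ord // nth_ord_enum. Qed.

Lemma size_lams : size lams = n.
Proof. by rewrite /lams size_map size_enum_ord. Qed.

Definition AX : 'M[{poly C}]_n :=
  \matrix_(i, j) ((Mt 0 i j)%:P + (Dm *m E *m Dm) i j *: 'X).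

Lemma MtE t : Mt t = Mt 0 + t *: (Dm *m E *m Dm).
Proof.
by rewrite /Mt scale0r addr0 !mulmx1 mulmxDr mulmx1 mulmxDl -scalemxAr -scalemxAl.
Qed.

Lemma map_lin (t : C) (A F : 'M[C]_n) :
  map_mx (horner_eval t) (\matrix_(i, j) ((A i j)%:P + F i j *: 'X)) = A + t *: F.
Proof.
apply/matrixP => i j; rewrite !mxE /= horner_evalE hornerD hornerC hornerZ hornerX.
by rewrite mulrC.
Qed.

Lemma AX_eval (t : C) : map_mx (horner_eval t) AX = Mt t.
Proof. rewrite /AX map_lin. rewrite -MtE. reflexivity. Qed.

End Mat.
End NM.

Section NM.
Variable R : realType.
Local Notation C := R[i].
Lemma family_lip (P : {poly {poly C}}) : exists2 L : R, 0 <= L &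
  forall t s k, nm t <= 1 -> nm s <= 1 ->
  nm ((P`_k).[t] - (P`_k).[s]) <= L * nm (t - s).
Proof.
pose Lc (c : {poly C}) := \sum_(i < size c) nm c`_i * i%:R.
have Lc0 : forall c, 0 <= Lc c.
  by move=> c; apply: sumr_ge0 => i _; apply: mulr_ge0; rewrite ?nm_ge0 ?ler0n.
exists (\sum_(k < size P) Lc P`_k).
  by apply: sumr_ge0 => k _; apply: Lc0.
move=> t s k ht hs.
apply: le_trans (poly_lip _ ht hs) _.
apply: ler_wpM2r; first exact: nm_ge0.
change (Lc P`_k <= \sum_(k0 < size P) Lc P`_k0).
case: (ltnP k (size P)) => Hk.
  have H := (@le_sum_term _ _ (fun k : 'I_(size P) => Lc P`_k) (Ordinal Hk) (fun i => Lc0 _)).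
  simpl in H. exact H.
rewrite (nth_default 0 Hk).
have -> : Lc 0 = 0 by rewrite /Lc size_poly0 big_ord0.
apply: sumr_ge0 => i _; exact: Lc0.
Qed.

Section Mat.
Variable n : nat.
Variable nu : 'I_n -> C.
Variable E : 'M[C]_n.
Local Notation Mt := (Mt nu E).
Local Notation AX := (AX nu E).
Local Notation lam := (lam nu).
Local Notation esum := (esum E).
Local Notation Dm := (Dm nu).

Lemma char_coef (t : C) k :
  (char_poly (Mt t))`_k = ((char_poly AX)`_k).[t].
Proof.
rewrite -AX_eval -map_char_poly coef_map.
exact: horner_evalE.
Qed.

Lemma lipschitz : exists2 L : R, 0 <= L & forall t s k, nm t <= 1 -> nm s <= 1 ->
  nm ((char_poly (Mt t))`_k - (char_poly (Mt s))`_k) <= L * nm (t - s).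
Proof.
have [L L0 HL] := family_lip (char_poly AX).
exists L; first exact: L0.
move=> t s k ht hs. have H := HL t s k ht hs. rewrite -(char_coef t k) -(char_coef s k) in H. exact H. Qed.


Lemma splitting (t : C) : exists2 s : seq C, size s = n & char_poly (Mt t) = Pr s.
Proof.
have [r Hr] := closed_field_poly_normal (char_poly (Mt t)).
have Hl : lead_coef (char_poly (Mt t)) = 1 := monicP (char_poly_monic _).
rewrite Hl scale1r in Hr.
exists r; last exact Hr.
have H := size_char_poly (Mt t).
rewrite Hr size_Pr in H.
case: H => H; exact H.
Qed.

End Mat.
End NM.

Section NM.
Variable R : realType.
Local Notation C := R[i].

Lemma nmV (x : C) : nm (x^-1) = (nm x)^-1.
Proof. by apply: complexI; rewrite fmorphV /= -!nmE normfV. Qed.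

Section Mat.
Variable n : nat.
Variable nu : 'I_n -> C.
Variable E : 'M[C]_n.
Local Notation Mt := (Mt nu E).
Local Notation lam := (lam nu).
Local Notation esum := (esum E).
Local Notation lams := (lams nu).

Definition ov : rel 'I_n := fun a b =>
  nm (lam a - lam b) <= esum * (nm (lam a) + nm (lam b)).
Definition gapf (p : 'I_n * 'I_n) : R :=
  nm (lam p.1 - lam p.2) - esum * (nm (lam p.1) + nm (lam p.2)).
Definition dgap : R := \big[Order.min/1]_(p | ~~ ov p.1 p.2) gapf p.

Lemma dgap_gt0 : 0 < dgap.
Proof.
apply: (big_ind (fun x => 0 < x)); first exact: ltr01.
  by move=> x y hx hy; rewrite lt_min hx hy.
move=> p; rewrite /ov -ltNge => h; rewrite /gapf subr_gt0; exact: h.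
Qed.

Lemma dgap_le p : ~~ ov p.1 p.2 -> dgap <= gapf p.
Proof. move=> h; rewrite /dgap; exact: (@bigmin_le_cond _ _ _ 1 p (fun p : 'I_n * 'I_n => ~~ ov p.1 p.2) gapf h). Qed.

Lemma gap_ov (z w : C) a b :
  nm (z - lam a) <= esum * nm (lam a) -> nm (w - lam b) <= esum * nm (lam b) ->
  nm (z - w) < dgap -> ov a b.
Proof.
move=> hz hw hd; apply/negPn/negP => hn.
have := dgap_le (p := (a, b)) hn; rewrite /gapf /= => hg.
have tri : nm (lam a - lam b) <= nm (lam a - z) + (nm (z - w) + nm (w - lam b)).
  have -> : lam a - lam b = (lam a - z) + ((z - w) + (w - lam b)) by ring.
  apply: le_trans (nmD _ _) _; apply: lerD => //; exact: nmD.
rewrite [nm (lam a - z)]nmC in tri; rewrite mulrDr in hg.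
lra.
Qed.

Lemma ov_le (he : esum <= 1/4) a b : ov a b ->
  nm (lam b) <= 2 * nm (lam a) /\ nm (lam b - lam a) <= 3 * esum * nm (lam a).
Proof.
rewrite /ov => h.
have e0 := esum_ge0 E.
have hB := nmB (lam b) (lam a).
rewrite (nmC (lam a)) in h.
have A0 := nm_ge0 (lam a); have B0 := nm_ge0 (lam b).
set A := nm (lam a) in h hB A0 *; set B := nm (lam b) in h hB B0 *.
set D := nm (lam b - lam a) in h hB *.
have k1 : B <= 2 * A by nra.
split => //.
nra.
Qed.

Lemma chain (he : esum <= 1/4) p x : path ov x p ->
  nm (lam (last x p)) <= 8 ^+ size p * nm (lam x) /\
  nm (lam (last x p) - lam x) <= esum * 8 ^+ size p * nm (lam x).
Proof.
have e0 := esum_ge0 E.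
elim: p x => [|y p IH] x /=.
  move=> _; rewrite expr0 mul1r mulr1 subrr nm0; split => //.
  by apply: mulr_ge0 => //; exact: nm_ge0.
move/andP => [hxy hp].
have [h1 h2] := IH y hp.
have [k1 k2] := ov_le he hxy.
have P1 : 1 <= 8 ^+ size p :> R by apply: exprn_ege1; lra.
have A0 := nm_ge0 (lam x); have Y0 := nm_ge0 (lam y).
have tri : nm (lam (last y p) - lam x) <= nm (lam (last y p) - lam y) + nm (lam y - lam x).
  have -> : lam (last y p) - lam x = (lam (last y p) - lam y) + (lam y - lam x) by ring.
  exact: nmD.
rewrite exprS.
set P := 8 ^+ size p in P1 h1 h2 *.
set A := nm (lam x) in A0 k1 k2 tri *; set Y := nm (lam y) in Y0 h1 h2 k1 k2 *.
have hPY : P * Y <= P * (2 * A) by apply: ler_wpM2l => //; lra.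
have heP : esum * P * Y <= esum * P * (2 * A).
  by apply: ler_wpM2l => //; apply: mulr_ge0 => //; lra.
have heA : 0 <= esum * A by apply: mulr_ge0.
have heAP : esum * A <= esum * A * P by rewrite -{1}[esum * A]mulr1; apply: ler_wpM2l.
split; first by nra.
have -> : esum * (8 * P) * A = 8 * (esum * A * P) by ring.
have heP' : esum * P * Y <= 2 * (esum * A * P).
  by apply: (le_trans heP); rewrite le_eqVlt; apply/orP; left; apply/eqP; ring.
lra.
Qed.

Lemma connect_bound (he : esum <= 1/4) j b : connect ov j b ->
  nm (lam b - lam j) <= esum * 8 ^+ n * nm (lam j) /\ nm (lam b) <= 8 ^+ n * nm (lam j).
Proof.
move/connectP => [p hp ->].
case: (shortenP hp) => p' hp' u _.
have [h1 h2] := chain he hp'.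
have sz : (size p' <= n)%N.
  have := max_card (mem (j :: p')); rewrite card_ord (card_uniqP u) /=.
  by move=> h; apply: ltnW.
have P8 : 8 ^+ size p' <= 8 ^+ n :> R by apply: ler_weXn2l => //; lra.
have e0 := esum_ge0 E.
have A0 := nm_ge0 (lam j).
split.
  apply: le_trans h2 _; rewrite -!mulrA; apply: ler_wpM2l => //.
  by apply: ler_wpM2r.
by apply: le_trans h1 _; apply: ler_wpM2r.
Qed.

End Mat.
End NM.

Section NM.
Variable R : realType.
Local Notation C := R[i].

Section Mat.
Variable n : nat.
Variable nu : 'I_n -> C.
Variable E : 'M[C]_n.
Local Notation Mt := (Mt nu E).
Local Notation lam := (lam nu).
Local Notation esum := (esum E).
Local Notation lams := (lams nu).
Local Notation ov := (ov nu E).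
Local Notation dgap := (dgap nu E).

Lemma homotopy (he : esum <= 1/4) : exists m : seq C,
  [/\ size m = n, char_poly (Mt 1) = Pr m &
      forall j : 'I_n, exists2 b, connect ov j b &
        nm (nth 0 m j - lam b) <= esum * nm (lam b)].
Proof.
have e0 := esum_ge0 E.
pose B := 1 + 2 * \sum_j nm (lam j).
have S0 : 0 <= \sum_j nm (lam j) by apply: sumr_ge0 => j _; exact: nm_ge0.
have B1 : 1 <= B by rewrite /B; lra.
have bnd : forall z b, nm (z - lam b) <= esum * nm (lam b) -> nm z <= B.
  move=> z b h.
  have t1 : nm z <= nm (z - lam b) + nm (lam b).
    by have := nmD (z - lam b) (lam b); rewrite subrK.
  have t2 : nm (lam b) <= \sum_j nm (lam j).
    by apply: (@le_sum_term _ _ (fun j => nm (lam j))) => j; exact: nm_ge0.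
  have t3 := nm_ge0 (lam b).
  have t4 : esum * nm (lam b) <= nm (lam b) by nra.
  rewrite /B; lra.
have [del del0 Hmatch] := matching B1 n (dgap_gt0 nu E).
have [L L0 HL] := lipschitz nu E.
pose K := (Num.Def.archi_bound (L / del)).+1.
have K0 : 0 < K%:R :> R by rewrite ltr0n.
have hK : L / del < K%:R.
  apply: lt_le_trans (archi_boundP _) _; first by apply: divr_ge0 => //; lra.
  by rewrite ler_nat.
pose tk (k : nat) : C := (k%:R / K%:R)%:C.
have tk_le1 : forall k, (k <= K)%N -> nm (tk k) <= 1.
  move=> k hk; rewrite /tk nmR ger0_norm; last by apply: divr_ge0; rewrite ?ler0n // ltW.
  by rewrite ler_pdivrMr // mul1r ler_nat.
have tk_step : forall k, L * nm (tk k - tk k.+1) <= del.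
  move=> k; rewrite nmC /tk -rmorphB /= nmR -mulrBl -natrB // subSnn.
  rewrite mul1r ger0_norm; last by rewrite invr_ge0 ltW.
  have h : L < K%:R * del by rewrite -ltr_pdivrMr.
  rewrite ler_pdivrMr //; rewrite mulrC; exact: ltW.
suff main : forall k, (k <= K)%N -> exists m : seq C,
  [/\ size m = n, char_poly (Mt (tk k)) = Pr m &
      forall j : 'I_n, exists2 b, connect ov j b &
        nm (nth 0 m j - lam b) <= esum * nm (lam b)].
  have tK : tk K = 1 by rewrite /tk divff ?gt_eqF.
  have := main K (leqnn K); rewrite tK; exact.
elim=> [|k IH] hk.
  exists lams; split.
  - exact: size_lams.
  - have -> : tk 0 = 0 by rewrite /tk mul0r.
    exact: char0.
  - move=> j; exists j; first exact: connect0.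
    rewrite nth_lams subrr nm0; apply: mulr_ge0 => //; exact: nm_ge0.
have [m [sm Hm Hinv]] := IH (ltnW hk).
have [s ss Hs] := splitting nu E (tk k.+1).
have incl : forall x, x \in s -> exists c, nm (x - lam c) <= esum * nm (lam c).
  move=> x xs; apply: (inclusion (tk_le1 _ hk)).
  rewrite Hs /Pr root_prod_XsubC; exact: xs.
have Bm : forall x, x \in m -> nm x <= B.
  move=> x /(nthP 0) [i hi <-].
  have hi' : (i < n)%N by rewrite -sm.
  have [b _ hb] := Hinv (Ordinal hi').
  exact: bnd hb.
have Bs : forall x, x \in s -> nm x <= B.
  move=> x xs; have [c hc] := incl x xs; exact: bnd hc.
have Hc : forall kk, nm ((Pr m)`_kk - (Pr s)`_kk) <= del.
  move=> kk; rewrite -Hm -Hs.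
  apply: le_trans (HL _ _ kk (tk_le1 _ (ltnW hk)) (tk_le1 _ hk)) _.
  exact: tk_step.
have [s' ps' Hcl] := Hmatch m s sm ss Bm Bs Hc.
exists s'; split.
- by rewrite -(perm_size ps').
- rewrite Hs /Pr (perm_big _ ps'); exact: erefl.
move=> j.
have [b hb hzb] := Hinv j.
have js' : nth 0 s' j \in s.
  rewrite (perm_mem ps') mem_nth // -(perm_size ps') ss; exact: ltn_ord.
have [c hc] := incl _ js'.
exists c => //.
apply: connect_trans hb (connect1 _).
exact: (gap_ov hzb hc (Hcl j (ltn_ord j))).
Qed.

Lemma pointwise (he : esum <= 1/4) : exists r : 'I_n -> C,
  (forall j, nm (r j) <= 2 * 8 ^+ n * esum) /\ char_poly (Mt 1) = \prod_(j < n) ('X - (nu j ^+ 2 * (1 + r j))%:P).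
Proof.
have e0 := esum_ge0 E.
have [m [sm Hm Hinv]] := homotopy he.
have close : forall j : 'I_n, nm (nth 0 m j - lam j) <= 2 * 8 ^+ n * esum * nm (lam j).
  move=> j; have [b hb hzb] := Hinv j.
  have [c1 c2] := connect_bound he hb.
  have tri : nm (nth 0 m j - lam j) <= nm (nth 0 m j - lam b) + nm (lam b - lam j).
    have -> : nth 0 m j - lam j = (nth 0 m j - lam b) + (lam b - lam j) by ring.
    exact: nmD.
  have A0 := nm_ge0 (lam j).
  have h3 : esum * nm (lam b) <= esum * (8 ^+ n * nm (lam j)) by apply: ler_wpM2l.
  have -> : 2 * 8 ^+ n * esum * nm (lam j) =
      esum * (8 ^+ n * nm (lam j)) + esum * 8 ^+ n * nm (lam j) by ring.
  lra.
exists (fun j => if lam j == 0 then 0 else nth 0 m j / lam j - 1); split.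
  move=> j; case: eqP => [_|/eqP hl].
    rewrite nm0; apply: mulr_ge0 => //; apply: mulr_ge0 => //; apply: exprn_ge0; lra.
  have -> : nth 0 m j / lam j - 1 = (nth 0 m j - lam j) / lam j by field.
  rewrite nmM nmV.
  have hl0 : 0 < nm (lam j) by rewrite lt_def nm_eq0 hl nm_ge0.
  rewrite ler_pdivrMr //; exact: close.
rewrite Hm /Pr (big_nth 0) sm big_mkord.
apply: eq_bigr => j _; congr ('X - _%:P).
case: eqP => [hl|/eqP hl].
  have := close j; rewrite hl nm0 mulr0 => h.
  have : nm (nth 0 m j - 0) == 0 by rewrite eq_le h nm_ge0.
  rewrite nm_eq0 subr0 => /eqP ->.
  by move: hl; rewrite /lam => ->; rewrite mul0r.
rewrite /lam in hl *; field; apply/negP => /eqP h0; move: hl; rewrite h0 expr2 mulr0 eqxx; done.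
Qed.

End Mat.
End NM.

Section Fin.
Variable R : realType.
Local Notation C := R[i].

Lemma fin_sum_O (I : finType) (f : I -> R -> R) (N : nat) :
  (forall i, exists C0 : R, exists h0 : R, 0 < h0 /\
     forall h, 0 < h < h0 -> f i h <= C0 * h ^+ N) ->
  exists C0 : R, exists h0 : R, 0 < h0 /\
     forall h, 0 < h < h0 -> \sum_i f i h <= C0 * h ^+ N.
Proof.
move=> H.
have H' : forall i, exists p : R * R, 0 < p.2 /\
    forall h, 0 < h < p.2 -> f i h <= p.1 * h ^+ N.
  move=> i; have [C0 [h0 [h00 Hh]]] := H i; by exists (C0, h0).
have [p Hp] := fin_all_exists H'.
exists (\sum_i (p i).1), (\big[Order.min/1]_i (p i).2); split.
  apply: (big_ind (fun x => 0 < x)); first exact: ltr01.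
    by move=> x y hx hy; rewrite lt_min hx hy.
  by move=> i _; have [] := Hp i.
move=> h /andP [h0 hh]; rewrite mulr_suml; apply: ler_sum => i _.
have [_ Hi] := Hp i; apply: Hi; rewrite h0 /=.
apply: lt_le_trans hh _; exact: bigmin_le.
Qed.

End Fin.


End All.

Theorem lemma6p2 (R : realType) (n : nat) (hn : (1 <= n)%N)
  (nu : 'I_n -> R -> R[i]) (E : R -> 'M[R[i]]_n) (hE : MOinf E) :
  exists r : 'I_n -> R -> R[i],
    (forall j, Oinf (r j)) /\
    exists h0 : R, 0 < h0 /\
      forall h : R, 0 < h < h0 ->
        char_poly (Mmat nu E h) =
        \prod_(j < n) ('X - ((nu j h) ^+ 2 * (1 + r j h))%:P).
Proof.
pose nuh h := fun j => nu j h.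
pose eh h := esum (E h).
have MmatE : forall h, Mmat nu E h = Mt (nuh h) (E h) 1.
  by move=> h; rewrite /Mmat /Mt /Dm scale1r.
have ehO : forall N, exists C0 : R, exists h0 : R, 0 < h0 /\
    forall h, 0 < h < h0 -> eh h <= C0 * h ^+ N.
  move=> N; apply: (fin_sum_O (f := fun i h => \sum_j nm (E h i j))) => i.
  apply: (fin_sum_O (f := fun j h => nm (E h i j))) => j.
  have [C0 [h0 [h00 Hh]]] := hE i j N.
  exists C0, h0; split => // h hh.
  by rewrite -lecR -nmE; apply: Hh.
pose P := fun h (f : 'I_n -> R[i]) =>
  (forall j, nm (f j) <= 2 * 8 ^+ n * eh h) /\
  char_poly (Mt (nuh h) (E h) 1) = \prod_(j < n) ('X - (nuh h j ^+ 2 * (1 + f j))%:P).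
pose rr := fun h => epsilon (inhabits (fun _ : 'I_n => (0 : R[i]))) (P h).
have [C1 [h1 [h10 Hh1]]] := ehO 1%N.
pose h0 := Order.min h1 (1 / (4 * (`|C1| + 1))).
have h00 : 0 < h0.
  rewrite lt_min h10 /=; apply: divr_gt0; first exact: ltr01.
  apply: mulr_gt0; first by []. 
  by apply: ltr_wpDl; [exact: normr_ge0 | exact: ltr01].
have good : forall h, 0 < h < h0 -> P h (rr h).
  move=> h /andP [hp hh]; apply: epsilon_spec.
  apply: pointwise.
  have hh1 : h < h1 by apply: lt_le_trans hh _; rewrite ge_min lexx.
  have hh2 : h < 1 / (4 * (`|C1| + 1)) by apply: lt_le_trans hh _; rewrite ge_min lexx orbT.
  have := Hh1 h; rewrite hp hh1 expr1 => /(_ isT) He.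
  have hC : C1 * h <= (`|C1| + 1) * h.
    by apply: ler_wpM2r; [exact: ltW | have := ler_norm C1; lra].
  have hA : 0 < `|C1| + 1 by apply: ltr_wpDl; [exact: normr_ge0 | exact: ltr01].
  rewrite ltr_pdivlMr in hh2; last by apply: mulr_gt0.
  have e : h * (4 * (`|C1| + 1)) = 4 * ((`|C1| + 1) * h) by ring.
  rewrite e in hh2.
  change (eh h <= 1 / 4); lra.
exists (fun j h => rr h j); split; last first.
  exists h0; split; first exact: h00.
  move=> h hh; rewrite MmatE; have [_ Hc] := good h hh; exact: Hc.
move=> j N.
have [CN [hN [hN0 HhN]]] := ehO N.
exists (2 * 8 ^+ n * CN), (Order.min h0 hN); split.
  by rewrite lt_min h00 hN0.
move=> h /andP [hp]; rewrite lt_min => /andP [hh0 hhN].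
have [Hb _] := good h (introT andP (conj hp hh0)).
rewrite nmE lecR.
apply: le_trans (Hb j) _.
have -> : 2 * 8 ^+ n * CN * h ^+ N = 2 * 8 ^+ n * (CN * h ^+ N) by ring.
apply: ler_wpM2l.
  by apply: mulr_ge0; [lra | apply: exprn_ge0; lra].
apply: HhN; by rewrite hp hhN.
Qed.
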